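(* Let $k\ge 2$, and let $p,q,\rho$ be real parameters with $p+(k-1)q=1$ such that all quantities below are nonnegative. Consider $k$-JRR: $n$ contributors with values in $[k]=\{1,\dots,k\}$ are partitioned into disjoint groups of two, and a group whose true values are $(v_1,v_2)$ reports $(v_1',v_2')\in[k]^2$ with probability $p^2+\rho pq$ if $v_1'=v_1,v_2'=v_2$; $pq-\frac{1}{k-1}\rho pq$ if $v_1'=v_1,v_2'\ne v_2$; $pq-\frac{1}{k-1}\rho pq$ if $v_1'\ne v_1,v_2'=v_2$; and $q^2+\frac{1}{(k-1)^2}\rho pq$ if $v_1'\ne v_1,v_2'\ne v_2$. Then each contributor reports its true value with probability $p$ and each specific other value with probability $q$. Consequently, if $n_v$ is the number of contributors with true value $v$ and $I_v$ the number of reports equal to $v$, then $\hat n_v=(I_v-nq)/(p-q)$ satisfies $\mathrm{E}[\hat n_v]=n_v$ for every $v\in[k]$ (assuming $p\ne q$). *)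

(* Defs.v *)
From mathcomp Require Import all_boot all_order all_algebra.
Set Implicit Arguments. Unset Strict Implicit. Unset Printing Implicit Defensive.
Import Order.TTheory GRing.Theory Num.Theory.
Local Open Scope ring_scope.

Definition jrr_kernel (R : realFieldType) (k : nat) (p q rho : R)
  (v w : 'I_k * 'I_k) : R :=
  let: (v1, v2) := v in let: (w1, w2) := w in
  if (w1 == v1) && (w2 == v2) then p ^+ 2 + rho * p * q
  else if (w1 == v1) && (w2 != v2) then p * q - (k.-1)%:R^-1 * rho * p * q
  else if (w1 != v1) && (w2 == v2) then p * q - (k.-1)%:R^-1 * rho * p * q
  else q ^+ 2 + ((k.-1)%:R ^+ 2)^-1 * rho * p * q.

(* m groups, group i has true values x i; reports y : one pair per group,
   drawn independently across groups. *)
Definition jrr_prob (R : realFieldType) (k m : nat) (p q rho : R)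
  (x : 'I_m -> 'I_k * 'I_k) (y : {ffun 'I_m -> 'I_k * 'I_k}) : R :=
  \prod_(i < m) jrr_kernel p q rho (x i) (y i).

Definition true_count (k m : nat) (x : 'I_m -> 'I_k * 'I_k) (v : 'I_k) : nat :=
  \sum_(i < m) (((x i).1 == v) + ((x i).2 == v))%N.

Definition report_count (k m : nat) (y : {ffun 'I_m -> 'I_k * 'I_k}) (v : 'I_k)
  : nat := \sum_(i < m) (((y i).1 == v) + ((y i).2 == v))%N.

Definition nhat (R : realFieldType) (k m : nat) (p q : R)
  (y : {ffun 'I_m -> 'I_k * 'I_k}) (v : 'I_k) : R :=
  ((report_count y v)%:R - (2 * m)%N%:R * q) / (p - q).

Definition E_nhat (R : realFieldType) (k m : nat) (p q rho : R)
  (x : 'I_m -> 'I_k * 'I_k) (v : 'I_k) : R :=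
  \sum_(y : {ffun 'I_m -> 'I_k * 'I_k}) jrr_prob p q rho x y * nhat p q y v.

(* Main.v *)
Require Import Defs.
From mathcomp Require Import all_boot all_order all_algebra.
From mathcomp Require Import ring.
Import Order.TTheory GRing.Theory Num.Theory.
Local Open Scope ring_scope.

Section Aux.
Variable R : realFieldType.

Lemma sum_split_const (k : nat) (v : 'I_k) (F : 'I_k -> R) (a c : R) :
  (forall w, w != v -> F w = c) -> F v = a ->
  \sum_(w < k) F w = a + (k.-1)%:R * c.
Proof.
move=> Hc Ha; rewrite (bigD1 v) //= Ha; congr (_ + _).
rewrite (eq_bigr (fun _ => c)); last by move=> w /Hc.
rewrite sumr_const.
have -> : #|[pred i : 'I_k | i != v]| = k.-1.
  by rewrite -[in RHS](card_ord k) -(cardC1 v); apply: eq_card => i.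
by rewrite mulr_natl.
Qed.

Lemma expect_prod (I J : finType) (F G : I -> J -> R) :
  (forall i, \sum_j F i j = 1) ->
  \sum_(y : {ffun I -> J}) (\prod_i F i (y i)) * \sum_i G i (y i)
  = \sum_i \sum_j F i j * G i j.
Proof.
move=> HF.
under eq_bigr => y _ do rewrite mulr_sumr.
rewrite exchange_big /=; apply: eq_bigr => i _.
pose F' j w := if j == i then F j w * G j w else F j w.
transitivity (\sum_(y : {ffun I -> J}) \prod_j F' j (y j)).
  apply: eq_bigr => y _.
  rewrite (bigD1 i) //= [in RHS](bigD1 i) //= /F' eqxx.
  rewrite mulrAC; congr (_ * _); symmetry.
  by apply: eq_bigr => j /negbTE ->.
rewrite -(bigA_distr_bigA F') (bigD1 i) //= [X in _ * X]big1 ?mulr1.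
  by apply: eq_bigr => w _; rewrite /F' eqxx.
by move=> j /negbTE ji; rewrite -(HF j); apply: eq_bigr => w _; rewrite /F' ji.
Qed.

Lemma total_prod (I J : finType) (F : I -> J -> R) :
  (forall i, \sum_j F i j = 1) ->
  \sum_(y : {ffun I -> J}) \prod_i F i (y i) = 1.
Proof.
by move=> HF; rewrite -(bigA_distr_bigA F) big1.
Qed.

Lemma sum_pair (k : nat) (F : 'I_k * 'I_k -> R) :
  \sum_w F w = \sum_(a < k) \sum_(b < k) F (a, b).
Proof. by rewrite pair_bigA; apply: eq_bigr => -[]. Qed.

Lemma sum_ind (k : nat) (v : 'I_k) (f : 'I_k -> R) :
  \sum_(a < k) (a == v)%:R * f a = f v.
Proof.
rewrite (bigD1 v) //= eqxx mul1r big1 ?addr0 // => a /negbTE ->.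
by rewrite mul0r.
Qed.

End Aux.

Theorem mainTheorem9 (R : realFieldType) (k : nat) (p q rho : R)
  (hk : (2 <= k)%N)
  (hpq : p + (k.-1)%:R * q = 1)
  (hp : 0 <= p) (hq : 0 <= q)
  (h1 : 0 <= p ^+ 2 + rho * p * q)
  (h2 : 0 <= p * q - (k.-1)%:R^-1 * rho * p * q)
  (h3 : 0 <= q ^+ 2 + ((k.-1)%:R ^+ 2)^-1 * rho * p * q) :
  (* marginals: each contributor reports its true value w.p. p, any other w.p. q *)
  (forall (v : 'I_k * 'I_k) (w1 : 'I_k),
      \sum_(w2 < k) jrr_kernel p q rho v (w1, w2) = if w1 == v.1 then p else q)
  /\ (forall (v : 'I_k * 'I_k) (w2 : 'I_k),
      \sum_(w1 < k) jrr_kernel p q rho v (w1, w2) = if w2 == v.2 then p else q)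
  (* unbiasedness of the estimator, for any number m of groups (n = 2m) *)
  /\ (p != q -> forall (m : nat) (x : 'I_m -> 'I_k * 'I_k) (v : 'I_k),
      E_nhat p q rho x v = (true_count x v)%:R).
Proof.
have hK : (k.-1)%:R != 0 :> R by rewrite pnatr_eq0 -lt0n -ltnS prednK // ltnW.
have M1 : forall (v : 'I_k * 'I_k) (w1 : 'I_k),
      \sum_(w2 < k) jrr_kernel p q rho v (w1, w2) = if w1 == v.1 then p else q.
  case=> v1 v2 w1 /=; case: (eqVneq w1 v1) => [_|ne].
    rewrite (@sum_split_const R k v2 _ (p ^+ 2 + rho * p * q) (p * q - (k.-1)%:R^-1 * rho * p * q)).
    - transitivity (p * (p + (k.-1)%:R * q)); last by rewrite hpq mulr1. field; exact: hK.
    - by move=> w /= ne; rewrite ?eqxx (negbTE ne).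
    - by rewrite /= !eqxx.
  rewrite (@sum_split_const R k v2 _ (p * q - (k.-1)%:R^-1 * rho * p * q) (q ^+ 2 + ((k.-1)%:R ^+ 2)^-1 * rho * p * q)).
  - transitivity (q * (p + (k.-1)%:R * q)); last by rewrite hpq mulr1. field; exact: hK.
  - by move=> w /= ne'; rewrite ?(negbTE ne) (negbTE ne') /= ?andbF.
  - by rewrite /= ?(negbTE ne) eqxx.
have M2 : forall (v : 'I_k * 'I_k) (w2 : 'I_k),
      \sum_(w1 < k) jrr_kernel p q rho v (w1, w2) = if w2 == v.2 then p else q.
  case=> v1 v2 w2 /=; case: (eqVneq w2 v2) => [_|ne].
    rewrite (@sum_split_const R k v1 _ (p ^+ 2 + rho * p * q) (p * q - (k.-1)%:R^-1 * rho * p * q)).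
    - transitivity (p * (p + (k.-1)%:R * q)); last by rewrite hpq mulr1. field; exact: hK.
    - by move=> w /= ne; rewrite ?eqxx (negbTE ne).
    - by rewrite /= !eqxx.
  rewrite (@sum_split_const R k v1 _ (p * q - (k.-1)%:R^-1 * rho * p * q) (q ^+ 2 + ((k.-1)%:R ^+ 2)^-1 * rho * p * q)).
  - transitivity (q * (p + (k.-1)%:R * q)); last by rewrite hpq mulr1. field; exact: hK.
  - by move=> w /= ne'; rewrite ?(negbTE ne) (negbTE ne') /= ?andbF.
  - by rewrite /= ?(negbTE ne) eqxx.
split=> //; split=> // hpq_ne m x v.
have HF : forall i, \sum_w jrr_kernel p q rho (x i) w = 1.
  move=> i; rewrite sum_pair.
  under eq_bigr => a _ do rewrite M1.
  rewrite (@sum_split_const R k (x i).1 _ p q) //.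
    by move=> w /negbTE ->.
  by rewrite eqxx.
have HG : forall i, \sum_w jrr_kernel p q rho (x i) w *
   (((w.1 == v) + (w.2 == v))%N)%:R =
   (p - q) * (((x i).1 == v)%:R + ((x i).2 == v)%:R) + q *+ 2.
  move=> i; rewrite sum_pair.
  under eq_bigr => a _ do under eq_bigr => b _ do rewrite /= natrD mulrDr.
  under eq_bigr => a _ do rewrite big_split /=.
  rewrite big_split /=.
  under eq_bigr => a _ do under eq_bigr => b _ do rewrite mulrC.
  under eq_bigr => a _ do rewrite -mulr_sumr M1.
  rewrite sum_ind exchange_big /=.
  under eq_bigr => b _ do under eq_bigr => a _ do rewrite mulrC.
  under eq_bigr => b _ do rewrite -mulr_sumr M2.
  rewrite sum_ind !(eq_sym v).
  by case: ((x i).1 == v); case: ((x i).2 == v); rewrite /= ?mulr1 ?mulr0 ?add0r ?addr0; ring.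
rewrite /E_nhat /nhat /jrr_prob.
under eq_bigr => y _ do rewrite mulrA mulrBr.
rewrite -mulr_suml sumrB.
rewrite -[X in _ - X]mulr_suml (@total_prod R _ _ (fun i w => jrr_kernel p q rho (x i) w) HF) mul1r.
under eq_bigr => y _ do rewrite /report_count natr_sum.
rewrite (@expect_prod R _ _ (fun i w => jrr_kernel p q rho (x i) w) (fun i w => (((w.1 == v) + (w.2 == v))%N)%:R) HF).
under eq_bigr => i _ do rewrite HG.
rewrite big_split /= -mulr_sumr sumr_const card_ord /true_count natr_sum.
under [RHS]eq_bigr => i _ do rewrite natrD.
have hd : p - q != 0 by rewrite subr_eq0.
set S := \sum_(i < m) _. rewrite -addrA.
have -> : q *+ 2 *+ m - (2 * m)%:R * q = 0.
  by rewrite -mulrnA mulr_natl subrr.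
by rewrite addr0 mulrAC divff // mul1r.
Qed.
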